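(* Let $G$ be a simple connected graph with $n$ vertices and $m$ edges, let $k\ge1$ be an integer, let $S_k(G)$ be the $k$-parallel subdivision graph of $G$, and let $N$ be the set of new (subdivision) vertices of $S_k(G)$. Let $i\neq j$ be vertices of $S_k(G)$. Then: (1) If $i,j\in V(G)$, then $\Omega_{ij}(S_k(G))=\frac{2}{k}\Omega_{ij}(G)$. (2) If $i\in N$, $j\in V(G)$ and the neighbours of $i$ in $S_k(G)$ are $s,t$, then $\Omega_{ij}(S_k(G))=\frac{k+2\Omega_{sj}(G)+2\Omega_{tj}(G)-\Omega_{st}(G)}{2k}$. (3) If $i,j\in N$, the neighbours of $i$ are $s,t$ and the neighbours of $j$ are $p,q$, then $\Omega_{ij}(S_k(G))=\frac{2k+\Omega_{sp}(G)+\Omega_{sq}(G)+\Omega_{tp}(G)+\Omega_{tq}(G)-\Omega_{pq}(G)-\Omega_{st}(G)}{2k}$.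
   Context: The $k$-parallel subdivision graph $S_k(G)$ is obtained from $G$ by replacing each edge $uv$ of $G$ by $k$ internally disjoint paths $u-w-v$ of length $2$ (each with its own new middle vertex $w$, whose neighbours are $u$ and $v$). $\Omega_{ab}(H)$ denotes the resistance distance between vertices $a,b$ of a connected graph $H$, i.e. the effective resistance between $a$ and $b$ when each edge of $H$ is a unit resistor ($\Omega_{aa}(H)=0$). *)

(* Defs.v *)
From HB Require Import structures.
From mathcomp Require Import all_boot all_order all_algebra.
Set Implicit Arguments. Unset Strict Implicit. Unset Printing Implicit Defensive.
Import Order.TTheory GRing.Theory Num.Theory.
Local Open Scope ring_scope.

Definition simple_graph (T : finType) (e : rel T) : Prop :=
  symmetric e /\ irreflexive e.

Definition connected_graph (T : finType) (e : rel T) : Prop :=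
  forall x y : T, connect e x y.

Definition laplacian (R : fieldType) (T : finType) (e : rel T) : 'M[R]_#|T| :=
  \matrix_(i, j)
    ((if i == j then \sum_(y : T) ((e (enum_val i) y)%:R : R) else 0)
      - ((e (enum_val i) (enum_val j))%:R : R)).

(* Resistance distance Omega_ab: potential v solving Kirchhoff's equations
   v L = e_a - e_b (unit current injected at a, extracted at b), read off as
   v_a - v_b.  For a connected graph any solution gives the same value;
   pinvmx picks one solution. *)
Definition resistance (R : fieldType) (T : finType) (e : rel T) (a b : T) : R :=
  let ia := enum_rank a in
  let ib := enum_rank b in
  let u : 'rV[R]_#|T| := delta_mx 0 ia - delta_mx 0 ib in
  let v := u *m pinvmx (laplacian R e) in
  v 0 ia - v 0 ib.

Definition is_edge (V : finType) (e : rel V) (A : {set V}) : bool :=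
  [exists x, exists y, e x y && (A == [set x; y])].

(* Vertex type of S_k(G): old vertices (inl) and new vertices (inr (uv, r)),
   one new vertex for each edge uv of G and each r < k. *)
Notation sdv_vert V e k := (V + ({A : {set V} | is_edge e A} * 'I_k))%type.

Definition sdv_adj (V : finType) (e : rel V) (k : nat) : rel (sdv_vert V e k) :=
  fun p q =>
    match p, q with
    | inl x, inr (A, _) => x \in val A
    | inr (A, _), inl x => x \in val A
    | _, _ => false
    end.
Arguments sdv_adj {V} e k.
Arguments resistance R {T} e a b.

(* Main.v *)
Require Import Defs.
From HB Require Import structures.
From mathcomp Require Import all_boot all_order all_algebra.
From mathcomp Require Import ring lra zify.
Set Implicit Arguments. Unset Strict Implicit. Unset Printing Implicit Defensive.
Import Order.TTheory GRing.Theory Num.Theory.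
Local Open Scope ring_scope.


Definition lap (R : realFieldType) (T : finType) (e : rel T) (f : T -> R) (x : T) : R :=
  \sum_y (e x y)%:R * (f x - f y).

Lemma lap_ext (R : realFieldType) (T : finType) (e : rel T) (f g : T -> R) x :
  f =1 g -> lap e f x = lap e g x.
Proof. by move=> fg; rewrite /lap; apply: eq_bigr => y _; rewrite !fg. Qed.

Lemma lapD (R : realFieldType) (T : finType) (e : rel T) (f g : T -> R) x :
  lap e (fun p => f p + g p) x = lap e f x + lap e g x.
Proof. rewrite /lap -big_split; apply: eq_bigr => y _ /=; ring. Qed.

Lemma lapZ (R : realFieldType) (T : finType) (e : rel T) (c : R) (f : T -> R) x :
  lap e (fun p => c * f p) x = c * lap e f x.
Proof. rewrite /lap mulr_sumr; apply: eq_bigr => y _ /=; ring. Qed.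

Lemma sum_ord (R : realFieldType) (T : finType) (F : T -> R) :
  \sum_(i < #|T|) F (enum_val i) = \sum_x F x.
Proof.
rewrite (reindex (@enum_rank T)) /=; last by apply: onW_bij; exact: enum_rank_bij.
by apply: eq_bigr => x _; rewrite enum_rankK.
Qed.

Lemma sum_delta (R : realFieldType) (T : finType) (f : T -> R) a :
  \sum_x f x * (x == a)%:R = f a.
Proof.
rewrite (bigD1 a) //= eqxx mulr1 big1 ?addr0 // => x; rewrite ?andTb => /negbTE ->.
by rewrite mulr0.
Qed.

Lemma bil (R : realFieldType) (T : finType) (e : rel T) (sym : symmetric e) (f g : T -> R) :
  2 * \sum_x g x * lap e f x
  = \sum_x \sum_y (e x y)%:R * ((g x - g y) * (f x - f y)).
Proof.
set A := \sum_x g x * lap e f x.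
have eA : A = \sum_x \sum_y (e x y)%:R * (- g y * (f x - f y)).
  rewrite /A /lap (eq_bigr (fun x => \sum_y g x * ((e x y)%:R * (f x - f y)))); last first.
    by move=> x _; rewrite mulr_sumr.
  rewrite exchange_big; apply: eq_bigr => x _; apply: eq_bigr => y _.
  rewrite sym; ring.
have eA' : A = \sum_x \sum_y (e x y)%:R * (g x * (f x - f y)).
  rewrite /A /lap; apply: eq_bigr => x _; rewrite mulr_sumr.
  by apply: eq_bigr => y _; ring.
rewrite mulr2n mulrDl mul1r {1}eA' eA -big_split; apply: eq_bigr => x _.
rewrite -big_split; apply: eq_bigr => y _ /=; ring.
Qed.

Lemma recip (R : realFieldType) (T : finType) (e : rel T) (sym : symmetric e) (f g : T -> R) :
  \sum_x g x * lap e f x = \sum_x f x * lap e g x.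
Proof.
apply: (@mulfI _ 2); first by rewrite pnatr_eq0.
rewrite !bil //; apply: eq_bigr => x _; apply: eq_bigr => y _; ring.
Qed.

Lemma recip_delta (R : realFieldType) (T : finType) (e : rel T) (sym : symmetric e)
  (f g : T -> R) a b c d :
  (forall x, lap e f x = (x == a)%:R - (x == b)%:R) ->
  (forall x, lap e g x = (x == c)%:R - (x == d)%:R) ->
  f c - f d = g a - g b.
Proof.
move=> Hf Hg; have := recip sym f g.
under eq_bigr do rewrite Hf mulrBr.
under [X in _ = X -> _]eq_bigr do rewrite Hg mulrBr.
by rewrite !sumrB !sum_delta => ->.
Qed.

Lemma mxlap (R : realFieldType) (T : finType) (e : rel T) (sym : symmetric e)
  (w : 'rV[R]_#|T|) j :
  (w *m laplacian R e) 0 j = lap e (fun x => w 0 (enum_rank x)) (enum_val j).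
Proof.
rewrite !mxE /lap.
under eq_bigr do rewrite mxE mulrBr.
rewrite sumrB.
rewrite (bigD1 j (P := xpredT) (F := fun i : 'I_#|T| => w 0 i * (if i == j then \sum_y (e (enum_val i) y)%:R else 0))) //=.
rewrite eqxx [X in w 0 j * _ + X]big1 ?addr0; last first.
  by move=> i; rewrite ?andTb => /negbTE ->; rewrite mulr0.
have E : \sum_(i < #|T|) w 0 i * (e (enum_val i) (enum_val j))%:R
    = \sum_x w 0 (enum_rank x) * (e x (enum_val j))%:R.
  rewrite -(sum_ord (fun x => w 0 (enum_rank x) * (e x (enum_val j))%:R)).
  by apply: eq_bigr => i _; rewrite enum_valK.
rewrite E.
under [in RHS]eq_bigr do rewrite mulrBr.
rewrite sumrB enum_valK -mulr_suml [in RHS]mulrC; congr (_ - _).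
by apply: eq_bigr => y _; rewrite sym mulrC.
Qed.

Lemma kernel (R : realFieldType) (T : finType) (e : rel T) (sym : symmetric e)
  (conn : forall x y, connect e x y) (f : T -> R) :
  (forall x, lap e f x = 0) -> forall x y, f x = f y.
Proof.
move=> H0.
have Q := bil sym f f.
rewrite big1 ?mulr0 // in Q; last by move=> x _; rewrite H0 mulr0.
have Hge : forall x y, 0 <= (e x y)%:R * ((f x - f y) * (f x - f y)) :> R.
  by move=> x y; rewrite mulr_ge0 ?ler0n // -expr2 sqr_ge0.
have Hx : forall x, \sum_y (e x y)%:R * ((f x - f y) * (f x - f y)) = 0 :> R.
  move=> x; apply: (psumr_eq0P _ (esym Q)) => // z _.
  by apply: sumr_ge0 => y _.
have Hxy : forall x y, e x y -> f x = f y.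
  move=> x y exy; have := psumr_eq0P (fun y _ => Hge x y) (Hx x) (i := y) isT.
  rewrite exy mul1r => /eqP; rewrite mulf_eq0 orbb subr_eq0 => /eqP //.
move=> x y.
have cl : closed e [pred z | f z == f x].
  by move=> u v /Hxy; rewrite !inE => ->.
have := closed_connect cl (conn x y); rewrite !inE eqxx => /esym /eqP.
by [].
Qed.

Definition umx (R : realFieldType) (T : finType) (a b : T) : 'rV[R]_#|T| :=
  delta_mx 0 (enum_rank a) - delta_mx 0 (enum_rank b).

Definition pot (R : realFieldType) (T : finType) (e : rel T) (a b : T) (x : T) : R :=
  (umx R a b *m pinvmx (laplacian R e)) 0 (enum_rank x).

Lemma res_pot (R : realFieldType) (T : finType) (e : rel T) (a b : T) :
  resistance R e a b = pot R e a b a - pot R e a b b.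
Proof. by []. Qed.

Lemma umxE (R : realFieldType) (T : finType) (a b x : T) :
  umx R a b 0 (enum_rank x) = (x == a)%:R - (x == b)%:R.
Proof. by rewrite !mxE !eqxx /= !(inj_eq enum_rank_inj). Qed.

Lemma pot_lap (R : realFieldType) (T : finType) (e : rel T) (sym : symmetric e) (a b : T) :
  (umx R a b <= laplacian R e)%MS ->
  forall x, lap e (pot R e a b) x = (x == a)%:R - (x == b)%:R.
Proof.
move=> H x; have := mulmxKpV H.
move=> /(congr1 (fun M : 'rV[R]_#|T| => M 0 (enum_rank x))).
by rewrite mxlap // enum_rankK umxE.
Qed.

Lemma res_sol (R : realFieldType) (T : finType) (e : rel T) (sym : symmetric e)
  (f : T -> R) (a b : T) :
  (forall x, lap e f x = (x == a)%:R - (x == b)%:R) ->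
  resistance R e a b = f a - f b.
Proof.
move=> Hf.
have sub : (umx R a b <= laplacian R e)%MS.
  have -> : umx R a b = (\row_j f (enum_val j)) *m laplacian R e.
    apply/rowP => j; rewrite mxlap //.
    rewrite (@lap_ext _ _ _ _ f); last by move=> x; rewrite mxE enum_rankK.
    by rewrite Hf -umxE enum_valK.
  exact: submxMl.
rewrite res_pot; apply: esym; exact: (recip_delta sym Hf (pot_lap sym sub)).
Qed.

Lemma Lsym (R : realFieldType) (T : finType) (e : rel T) (sym : symmetric e) :
  (laplacian R e)^T = laplacian R e.
Proof.
apply/matrixP => i j; rewrite !mxE; case: (eqVneq i j) => [->|ne] //.
by rewrite sym.
Qed.

Lemma exist_G (R : realFieldType) (T : finType) (e : rel T) (sym : symmetric e)
  (conn : forall x y, connect e x y) (a b : T) :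
  (umx R a b <= laplacian R e)%MS.
Proof.
set L := laplacian R e.
have n0 : (0 < #|T|)%N by apply/card_gt0P; exists a.
set one : 'cV[R]_#|T| := const_mx 1.
have L1 : L *m one = 0.
  rewrite -[L]Lsym // -[one]trmxK -trmx_mul.
  have -> : one^T *m L = 0; last by rewrite trmx0.
  apply/rowP => j; rewrite mxlap // mxE /lap big1 // => y _.
  by rewrite !mxE subrr mulr0.
have kerL : (kermx L <= (const_mx 1 : 'rV[R]_#|T|))%MS.
  apply/row_subP => i; set w := row i (kermx L).
  have wL : w *m L = 0 by rewrite /w -row_mul mulmx_ker row0.
  have fc : forall j, w 0 j = w 0 (enum_rank a).
    move=> j; rewrite -(enum_valK j).
    apply: (kernel sym conn (f := fun x => w 0 (enum_rank x))) => x.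
    by have := mxlap sym w (enum_rank x); rewrite enum_rankK wL mxE => <-.
  have -> : w = w 0 (enum_rank a) *: const_mx 1.
    by apply/rowP => j; rewrite [LHS]fc [RHS]mxE [const_mx 1 0 j]mxE mulr1.
  by apply: scalemx_sub; exact: submx_refl.
have rk1 : (\rank (kermx L) <= 1)%N := leq_trans (mxrankS kerL) (rank_leq_row _).
rewrite mxrank_ker in rk1.
have rone : \rank one = 1%N.
  apply/eqP; rewrite eqn_leq rank_leq_col lt0n mxrank_eq0.
  apply/eqP => /matrixP /(_ (Ordinal n0) 0); rewrite !mxE => /eqP.
  by rewrite oner_eq0.
have LK : (L <= kermx one)%MS by rewrite sub_kermx L1.
have KL : (kermx one <= L)%MS.
  have [_ <-] := mxrank_leqif_sup LK.
  rewrite eqn_leq mxrankS //= mxrank_ker rone.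
  by rewrite leq_subLR addnC -leq_subLR.
apply: submx_trans KL; rewrite sub_kermx /umx mulmxBl -!rowE !row_const subrr.
by [].
Qed.

Lemma rec_G (R : realFieldType) (T : finType) (e : rel T) (sym : symmetric e)
  (conn : forall x y, connect e x y) (f : T -> R) a b r :
  (forall x, lap e f x = (x == a)%:R - (x == b)%:R) ->
  forall x y, f x - f y = (pot R e x r a - pot R e x r b) - (pot R e y r a - pot R e y r b).
Proof.
move=> Hf x y.
have hx := recip_delta sym Hf (pot_lap sym (exist_G R sym conn x r)).
have hy := recip_delta sym Hf (pot_lap sym (exist_G R sym conn y r)).
rewrite -hx -hy; ring.
Qed.

Lemma N_sym (R : realFieldType) (T : finType) (e : rel T) (sym : symmetric e)
  (conn : forall x y, connect e x y) r x a :
  pot R e x r a - pot R e x r r = pot R e a r x - pot R e a r r.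
Proof.
exact: (recip_delta sym (pot_lap sym (exist_G R sym conn x r))
                         (pot_lap sym (exist_G R sym conn a r))).
Qed.

Definition Nf (R : realFieldType) (T : finType) (e : rel T) (r x y : T) : R :=
  pot R e x r y - pot R e x r r.

Lemma rec_N (R : realFieldType) (T : finType) (e : rel T) (sym : symmetric e)
  (conn : forall x y, connect e x y) (r : T) (f : T -> R) a b :
  (forall x, lap e f x = (x == a)%:R - (x == b)%:R) ->
  forall x y, f x - f y = Nf R e r x a - Nf R e r x b - Nf R e r y a + Nf R e r y b.
Proof. move=> Hf x y; rewrite (rec_G sym conn r Hf x y) /Nf; ring. Qed.

Lemma res_N (R : realFieldType) (T : finType) (e : rel T) (sym : symmetric e)
  (conn : forall x y, connect e x y) (r : T) a b :
  resistance R e a b = Nf R e r a a - Nf R e r a b - Nf R e r b a + Nf R e r b b.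
Proof. by rewrite res_pot (rec_N sym conn r (pot_lap sym (exist_G R sym conn a b))). Qed.

Lemma Nf_sym (R : realFieldType) (T : finType) (e : rel T) (sym : symmetric e)
  (conn : forall x y, connect e x y) (r x y : T) : Nf R e r x y = Nf R e r y x.
Proof. exact: N_sym. Qed.

Lemma lap_comb (R : realFieldType) (T : finType) (e : rel T) (f g h : T -> R) (a b : R) x :
  lap e (fun p => f p + a * g p + b * h p) x = lap e f x + a * lap e g x + b * lap e h x.
Proof. rewrite /lap !mulr_sumr -!big_split; apply: eq_bigr => y _ /=; ring. Qed.


Lemma symS (V : finType) (e : rel V) (k : nat) : symmetric (sdv_adj e k).
Proof. by case=> [x|[A r]] [y|[B s]]. Qed.

Lemma edge_ends (V : finType) (e : rel V) (A : {A : {set V} | is_edge e A}) :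
  simple_graph e -> exists x y, [/\ e x y, x != y & val A = [set x; y]].
Proof.
move=> [sym irr]; case: A => A /= /existsP [x /existsP [y /andP [exy /eqP ->]]].
exists x, y; split => //; apply/eqP => xy; move: exy; by rewrite xy irr.
Qed.

Lemma sum_in2 (R : realFieldType) (V : finType) (x0 y0 : V) (F : V -> R) :
  x0 != y0 -> \sum_(y in [set x0; y0]) F y = F x0 + F y0.
Proof.
move=> ne; rewrite (bigD1 x0) ?in_set2 ?eqxx //=; congr (_ + _).
apply: big_pred1 => z /=; rewrite in_set2.
case: (eqVneq z x0) => [->|] /=; last by rewrite andbT.
by rewrite (negbTE ne).
Qed.

Lemma sum_ind (R : realFieldType) (V : finType) (A : {set V}) (F : V -> R) :
  \sum_y (y \in A)%:R * F y = \sum_(y in A) F y.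
Proof.
rewrite [RHS]big_mkcond /=; apply: eq_bigr => y _.
by case: (y \in A); rewrite ?mul1r ?mul0r.
Qed.

Definition ext (R : realFieldType) (V : finType) (e : rel V) (k : nat) (g : V -> R)
  (p : sdv_vert V e k) : R :=
  match p with inl y => g y | inr (A, _) => (\sum_(y in val A) g y) / 2 end.
Arguments ext {R V e} k g p.

Lemma lap_ext_inr (R : realFieldType) (V : finType) (e : rel V) (k : nat) (g : V -> R) A r :
  simple_graph e -> lap (sdv_adj e k) (ext k g) (inr (A, r)) = 0.
Proof.
move=> sg; rewrite /lap big_sumType /=.
rewrite [X in _ + X]big1 ?addr0; last by move=> [B s] _; rewrite mul0r.
have [x0 [y0 [_ ne ->]]] := edge_ends A sg.
rewrite sum_ind.
by rewrite !sum_in2 //; field; rewrite ?pnatr_eq0.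
Qed.

Lemma mem2 (V : finType) (x y u v : V) :
  x \in [set u; v] -> y \in [set u; v] -> x != y ->
  (x == u) && (y == v) || (x == v) && (y == u).
Proof.
rewrite !in_set2; case/orP => /eqP ->; case/orP => /eqP ->; rewrite ?eqxx ?orbT //.
Qed.

Lemma count_edges (R : realFieldType) (V : finType) (e : rel V) (x y : V) :
  simple_graph e -> x != y ->
  \sum_(A : {A : {set V} | is_edge e A}) ((x \in val A) && (y \in val A))%:R
    = (e x y)%:R :> R.
Proof.
move=> sg xy; have [sym irr] := sg.
case exy: (e x y).
  have hA0 : is_edge e [set x; y].
    by apply/existsP; exists x; apply/existsP; exists y; rewrite exy eqxx.
  rewrite (bigD1 (exist (fun B : {set V} => is_edge e B) [set x; y] hA0)) //= !in_set2 !eqxx orbT /= big1 ?addr0 // => A.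
  rewrite ?andTb => neA; case H: ((x \in val A) && (y \in val A)) => //; exfalso.
  move/andP: H => [xA yA]; have [u [v [euv nuv vA]]] := edge_ends A sg.
  move: (xA) (yA); rewrite vA => xA' yA'.
  move: neA; apply/negP; rewrite negbK; apply/eqP; apply: val_inj => /=.
  rewrite vA; have := mem2 xA' yA' xy.
  by case/orP => /andP [/eqP -> /eqP ->] //; rewrite setUC.
apply: big1 => A _; case H: ((x \in val A) && (y \in val A)) => //; exfalso.
move/andP: H => [xA yA]; have [u [v [euv nuv vA]]] := edge_ends A sg.
move: xA yA; rewrite vA => xA yA; have := mem2 xA yA xy.
case/orP => /andP [/eqP xu /eqP yv]; move: exy; rewrite xu yv ?euv //.
by rewrite sym euv.
Qed.

Lemma lap_ext_inl (R : realFieldType) (V : finType) (e : rel V) (k : nat) (g : V -> R) x :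
  simple_graph e -> lap (sdv_adj e k) (ext k g) (inl x) = k%:R / 2 * lap e g x.
Proof.
move=> sg; rewrite /lap big_sumType /= big1 ?add0r; last by move=> y _; rewrite mul0r.
pose H := fun A : {A : {set V} | is_edge e A} =>
  (x \in val A)%:R * (g x - (\sum_(y in val A) g y) / 2) : R.
rewrite (eq_bigr (fun q => H q.1)); last by move=> [A s] _.
have := pair_big xpredT xpredT (fun A (_ : 'I_k) => H A); rewrite /= => <-.
under eq_bigr do rewrite sumr_const card_ord -mulr_natl.
rewrite -mulr_sumr.
have HA : forall A, H A = 2^-1 * \sum_y ((x \in val A) && (y \in val A))%:R * (g x - g y).
  move=> A; rewrite /H; have [u [v [euv nuv ->]]] := edge_ends A sg.
  case xA: (x \in [set u; v]); last by rewrite mul0r big1 ?mulr0 // => y _; rewrite mul0r.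
  rewrite mul1r /=.
  by rewrite sum_ind !sum_in2 //; field; rewrite ?pnatr_eq0.
rewrite (eq_bigr _ (fun A _ => HA A)).
rewrite -mulr_sumr exchange_big /= mulrA; congr (_ * _).
apply: eq_bigr => y _; rewrite -mulr_suml.
case: (eqVneq x y) => [->|xy]; first by rewrite !subrr !mulr0.
by rewrite count_edges // mulrC.
Qed.

Lemma sum_delta1 (R : realFieldType) (T : finType) (a : T) :
  \sum_x (x == a)%:R = 1 :> R.
Proof. rewrite -[RHS](sum_delta (fun _ => 1 : R) a); apply: eq_bigr => x _; by rewrite mul1r. Qed.

Definition ind (R : realFieldType) (T : finType) (w : T) (p : T) : R := (p == w)%:R.

Lemma lap_ind (R : realFieldType) (V : finType) (e : rel V) (k : nat)
  (i : {A : {set V} | is_edge e A} * 'I_k) (s t : V) :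
  s != t ->
  (forall x, sdv_adj e k (inr i) x = (x == inl s) || (x == inl t)) ->
  forall z, lap (sdv_adj e k) (ind R (inr i)) z
    = 2 * (z == inr i)%:R - (z == inl s)%:R - (z == inl t)%:R.
Proof.
move=> st hi z; rewrite /ind.
have nst : (inl s == inl t :> sdv_vert V e k) = false.
  by apply/negbTE; apply: contra st => /eqP [->].
have orR : forall q : sdv_vert V e k,
    ((q == inl s) || (q == inl t))%:R = (q == inl s)%:R + (q == inl t)%:R :> R.
  move=> q; case: (eqVneq q (inl s)) => [->|]; first by rewrite nst addr0.
  by rewrite /= add0r.
case: (eqVneq z (inr i)) => [->|nz].
  rewrite /lap (eq_bigr (fun q => (q == inl s)%:R + (q == inl t)%:R)); last first.
    move=> q _; rewrite hi orR eqxx.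
    case: (eqVneq q (inr i)) => [->|nq]; last by rewrite subr0 mulr1.
    by rewrite subrr mulr0 /= addr0.
  by rewrite big_split /= !sum_delta1 /=; ring.
rewrite /lap (eq_bigr (fun q => - ((sdv_adj e k z q)%:R * (q == inr i)%:R))); last first.
  by move=> q _; rewrite (negbTE nz) sub0r mulrN.
rewrite sumrN sum_delta symS hi orR /=; ring.
Qed.


Lemma part1 (R : realFieldType) (V : finType) (e : rel V) (k : nat) :
  simple_graph e -> connected_graph e -> (0 < k)%N ->
  forall i j : V, resistance R (sdv_adj e k) (inl i) (inl j) = (2 / k%:R) * resistance R e i j.
Proof.
move=> sg conn k0 i j; have [sym irr] := sg.
have kne : k%:R != 0 :> R by rewrite pnatr_eq0 -lt0n.
pose phi := pot R e i j.
have Hphi := pot_lap sym (exist_G R sym conn i j).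
pose psi := @ext R V e k (fun y => 2 / k%:R * phi y).
have Hpsi : forall z, lap (sdv_adj e k) psi z = (z == inl i)%:R - (z == inl j)%:R.
  case=> [x|[A r]].
    by rewrite lap_ext_inl // lapZ Hphi /=; field; rewrite ?kne.
  by rewrite /psi lap_ext_inr //= subrr.
by rewrite (res_sol (@symS V e k) Hpsi) res_pot /psi /phi /= mulrBr.
Qed.

Lemma part2 (R : realFieldType) (V : finType) (e : rel V) (k : nat) :
  simple_graph e -> connected_graph e -> (0 < k)%N ->
  forall (i : {A : {set V} | is_edge e A} * 'I_k) (j s t : V),
     s != t ->
     (forall x : sdv_vert V e k,
        sdv_adj e k (inr i) x = (x == inl s) || (x == inl t)) ->
     resistance R (sdv_adj e k) (inr i) (inl j)
       = (k%:R + 2 * resistance R e s j + 2 * resistance R e t j - resistance R e s t) / (2 * k%:R).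
Proof.
move=> sg conn k0 i j s t st hi; have [sym irr] := sg.
have kne : k%:R != 0 :> R by rewrite pnatr_eq0 -lt0n.
have hA : val i.1 = [set s; t].
  apply/setP => y; have := hi (inl y); case: i hi => A r hi /= ->.
  by rewrite in_set2.
have Hs := pot_lap sym (exist_G R sym conn s j).
have Ht := pot_lap sym (exist_G R sym conn t j).
pose g := fun y => pot R e s j y + pot R e t j y.
pose psi := fun p => @ext R V e k (fun y => k%:R^-1 * g y) p + 2^-1 * ind R (inr i) p.
have Hpsi : forall z, lap (sdv_adj e k) psi z = (z == inr i)%:R - (z == inl j)%:R.
  move=> z; rewrite /psi lapD lapZ (lap_ind R st hi).
  case: z => [x|[A r]].
    rewrite lap_ext_inl // lapZ lapD Hs Ht /=; field; by rewrite ?kne.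
  by rewrite lap_ext_inr //=; field.
rewrite (res_sol (@symS V e k) Hpsi) /psi /ind /=.
case: i hi hA {Hpsi psi} => A r hi /= hA.
rewrite hA sum_in2 // eqxx /=.
have HC : resistance R e s t = 2 * resistance R e s j + 2 * resistance R e t j
                               - (g s + g t - 2 * g j).
  rewrite /g !(res_N R sym conn j).
  have e1 := rec_N sym conn j Hs s j; have e2 := rec_N sym conn j Hs t j.
  have e3 := rec_N sym conn j Ht s j; have e4 := rec_N sym conn j Ht t j.
  have n1 := Nf_sym R sym conn j s j; have n2 := Nf_sym R sym conn j t j.
  have n3 := Nf_sym R sym conn j s t.
  lra.
rewrite HC; field; by rewrite ?kne.
Qed.

Lemma part3 (R : realFieldType) (V : finType) (e : rel V) (k : nat) :
  simple_graph e -> connected_graph e -> (0 < k)%N ->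
  forall (i j : {A : {set V} | is_edge e A} * 'I_k) (s t p q : V),
     i != j -> s != t -> p != q ->
     (forall x : sdv_vert V e k,
        sdv_adj e k (inr i) x = (x == inl s) || (x == inl t)) ->
     (forall x : sdv_vert V e k,
        sdv_adj e k (inr j) x = (x == inl p) || (x == inl q)) ->
     resistance R (sdv_adj e k) (inr i) (inr j)
       = (2 * k%:R + resistance R e s p + resistance R e s q + resistance R e t p
          + resistance R e t q - resistance R e p q - resistance R e s t)
           / (2 * k%:R).
Proof.
move=> sg conn k0 i j s t p q ij st pq hi hj; have [sym irr] := sg.
have kne : k%:R != 0 :> R by rewrite pnatr_eq0 -lt0n.
have hA : val i.1 = [set s; t].
  apply/setP => y; have := hi (inl y); case: i ij hi => A r ij hi /= ->.
  by rewrite in_set2.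
have hB : val j.1 = [set p; q].
  apply/setP => y; have := hj (inl y); case: j ij hj => A r ij hj /= ->.
  by rewrite in_set2.
have Hs := pot_lap sym (exist_G R sym conn s p).
have Ht := pot_lap sym (exist_G R sym conn t q).
pose g := fun y => pot R e s p y + pot R e t q y.
pose psi := fun z => (@ext R V e k (fun y => k%:R^-1 * g y) z + 2^-1 * ind R (inr i) z)
                     + (- 2^-1) * ind R (inr j) z.
have Hpsi : forall z, lap (sdv_adj e k) psi z = (z == inr i)%:R - (z == inr j)%:R.
  move=> z; rewrite /psi lap_comb (lap_ind R st hi) (lap_ind R pq hj).
  case: z => [x|[A r]].
    rewrite lap_ext_inl // lapZ lapD Hs Ht /=; field; by rewrite ?kne.
  by rewrite lap_ext_inr //=; field.
rewrite (res_sol (@symS V e k) Hpsi) /psi /ind /=.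
have nij : (inr i == inr j :> sdv_vert V e k) = false.
  by apply/negbTE; apply: contra ij => /eqP [->].
have nji : (inr j == inr i :> sdv_vert V e k) = false by rewrite eq_sym.
rewrite nij nji !eqxx.
case: i hi hA {Hpsi psi nij nji ij} => A r hi /= hA.
case: j hj hB => B r' hj /= hB.
rewrite hA hB !sum_in2 //.
have HC : resistance R e s t = resistance R e s p + resistance R e s q + resistance R e t p
            + resistance R e t q - resistance R e p q - (g s + g t - g p - g q).
  rewrite /g !(res_N R sym conn s).
  have e1 := rec_N sym conn s Hs s p; have e2 := rec_N sym conn s Hs t q.
  have e3 := rec_N sym conn s Ht s p; have e4 := rec_N sym conn s Ht t q.
  have n1 := Nf_sym R sym conn s s t; have n2 := Nf_sym R sym conn s s p.
  have n3 := Nf_sym R sym conn s s q; have n4 := Nf_sym R sym conn s t p.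
  have n5 := Nf_sym R sym conn s t q; have n6 := Nf_sym R sym conn s p q.
  lra.
rewrite HC; field; by rewrite ?kne.
Qed.

Theorem corollary4p3 (R : realFieldType) (V : finType) (e : rel V) (k : nat) :
  simple_graph e -> connected_graph e -> (0 < k)%N ->
  let Om := resistance R e in
  let OmS := resistance R (sdv_adj e k) in
  (* (1) both vertices old *)
  (forall i j : V, i != j ->
     OmS (inl i) (inl j) = (2 / k%:R) * Om i j) /\
  (* (2) i new with neighbours s, t; j old *)
  (forall (i : {A : {set V} | is_edge e A} * 'I_k) (j s t : V),
     s != t ->
     (forall x : sdv_vert V e k,
        sdv_adj e k (inr i) x = (x == inl s) || (x == inl t)) ->
     OmS (inr i) (inl j)
       = (k%:R + 2 * Om s j + 2 * Om t j - Om s t) / (2 * k%:R)) /\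
  (* (3) i, j new, neighbours s, t of i and p, q of j *)
  (forall (i j : {A : {set V} | is_edge e A} * 'I_k) (s t p q : V),
     i != j -> s != t -> p != q ->
     (forall x : sdv_vert V e k,
        sdv_adj e k (inr i) x = (x == inl s) || (x == inl t)) ->
     (forall x : sdv_vert V e k,
        sdv_adj e k (inr j) x = (x == inl p) || (x == inl q)) ->
     OmS (inr i) (inr j)
       = (2 * k%:R + Om s p + Om s q + Om t p + Om t q - Om p q - Om s t)
           / (2 * k%:R)).
Proof.
move=> sg conn k0 Om OmS; rewrite /Om /OmS; split; [|split].
- by move=> i j _; apply: part1.
- by move=> i j s t st hi; apply: part2.
- by move=> i j s t p q ij st pq hi hj; apply: part3.
Qed.
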